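(* Let $s$ be an integer such that $3s^2-4s+4$ is a perfect square, let $F_s(t)= t^4 + (4s^3 - 4s^2 + 8s - 4)t^3 + (-6s^2 - 6)t^2 + 4t + 1$, and let $K_s$ be its splitting field over $\mathbb{Q}$. Put $$f=\frac{s+\sqrt{3s^2-4s+4}}{2},\qquad g=\frac{s-\sqrt{3s^2-4s+4}}{2}$$ (integers), and let $M$ be the linear fractional transformation $$M\theta=\frac{f\theta-1}{\frac{f^2+g^2}{2}\theta-g}.$$ Then $\mathrm{Gal}(K_s/\mathbb{Q})$ is cyclic of order $4$, $K_s=\mathbb{Q}(r)$ for any root $r$ of $F_s$, and there is a generator $\sigma$ of $\mathrm{Gal}(K_s/\mathbb{Q})$ such that $\sigma(r)=Mr$ for every root $r$ of $F_s$. *)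

(* Defs.v *)
From HB Require Import structures.
From mathcomp Require Import all_boot all_order all_algebra all_fingroup all_solvable all_field.
Set Implicit Arguments. Unset Strict Implicit. Unset Printing Implicit Defensive.
Import GRing.Theory Num.Theory.
Local Open Scope ring_scope.

Definition Fs (s : int) : {poly rat} :=
  'X^4 + ((4 * s ^+ 3 - 4 * s ^+ 2 + 8 * s - 4)%:~R)%:P * 'X^3
  + ((- 6 * s ^+ 2 - 6)%:~R)%:P * 'X^2 + 4%:P * 'X + 1.

(* The Moebius map M theta = (f theta - 1) / (((f^2+g^2)/2) theta - g),
   with f = (s+m)/2, g = (s-m)/2, m = sqrt(3s^2-4s+4). *)
Definition Mf (L : fieldType) (s m : int) : L := (s + m)%:~R / 2.
Definition Mg (L : fieldType) (s m : int) : L := (s - m)%:~R / 2.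
Definition Mden (L : fieldType) (s m : int) (x : L) : L :=
  (Mf L s m ^+ 2 + Mg L s m ^+ 2) / 2 * x - Mg L s m.
Definition Mmap (L : fieldType) (s m : int) (x : L) : L :=
  (Mf L s m * x - 1) / Mden s m x.

(* Main.v *)
Require Import Defs.
From HB Require Import structures.
From mathcomp Require Import all_boot all_order all_algebra all_fingroup all_solvable all_field.
From mathcomp Require Import zify ring.
Import GRing.Theory Num.Theory.
Local Open Scope ring_scope.

Lemma u1 (x y : int) : x * y = 1 -> (x = 1 /\ y = 1) \/ (x = -1 /\ y = -1).
Proof. move=> h; have /orP[/eqP hy|/eqP hy] := intUnitRing.unitzPl h; subst y; [left|right]; split=>//; lia. Qed.

Lemma c1 (s : int) : 4 * s ^+ 3 - 4 * s ^+ 2 + 8 * s - 4 = 4 \/ 4 * s ^+ 3 - 4 * s ^+ 2 + 8 * s - 4 = -4 -> s = 0 \/ s = 1.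
Proof. move=> h.
have : s <= -1 \/ s = 0 \/ s = 1 \/ 2 <= s by lia.
case=> [hx|[hx|[hx|hx]]]; try lia.
have h2 : 4 <= s ^+ 2 by nia.
have h3 : 2 * s ^+ 2 <= s ^+ 3 by rewrite exprS; nia.
nia.
Qed.

Lemma c2 (m : int) : m ^+ 2 = 3 -> False.
Proof. move=> h.
have : m <= -2 \/ m = -1 \/ m = 0 \/ m = 1 \/ 2 <= m by lia.
case=> [hx|[hx|[hx|[hx|hx]]]]; try (subst m; lia); nia. Qed.

Lemma c3 (x y : int) : x + y = -4 -> x * y = -4 -> False.
Proof. move=> h1 h2.
have : x <= -5 \/ x = -4 \/ x = -3 \/ x = -2 \/ x = -1 \/ x = 0 \/ 1 <= x by lia.
case=> [hx|[hx|[hx|[hx|[hx|[hx|hx]]]]]]; try (subst x; lia); nia. Qed.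

Lemma c4 (s : int) : 1 + (4 * s ^+ 3 - 4 * s ^+ 2 + 8 * s - 4) + (- 6 * s ^+ 2 - 6) + 4 + 1 = 0 -> False.
Proof. move=> h.
have : s <= -1 \/ s = 0 \/ s = 1 \/ s = 2 \/ 3 <= s by lia.
case=> [hx|[hx|[hx|[hx|hx]]]]; try (subst s; lia).
  have h2 : 1 <= s ^+ 2 by nia. nia.
have h2 : 9 <= s ^+ 2 by nia. nia.
Qed.
Lemma c5 (s : int) : 1 - (4 * s ^+ 3 - 4 * s ^+ 2 + 8 * s - 4) + (- 6 * s ^+ 2 - 6) - 4 + 1 = 0 -> False.
Proof. move=> h.
have : s <= -1 \/ s = 0 \/ 1 <= s by lia.
case=> [hx|[hx|hx]]; try (subst s; lia).
  have h2 : 1 <= s ^+ 2 by nia. nia.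
have h2 : 1 <= s ^+ 2 by nia. nia.
Qed.

Lemma c3' (x y : int) : x + y = 4 \/ x + y = -4 -> x * y = -4 -> False.
Proof. case=> h1 h2.
  apply: (c3 (-x) (-y)); lia.
exact: (c3 _ _ h1 h2).
Qed.

Definition GG {L : fieldType} (a b u v : L) :=
  u ^+ 4 + a * u ^+ 3 * v + b * u ^+ 2 * v ^+ 2 + 4 * u * v ^+ 3 + v ^+ 4.

Lemma key_id (L : fieldType) (f g x : L) : (forall n : nat, (n.+1)%:R != 0 :> L) ->
  GG (4 * (f + g) ^+ 3 - 4 * (f + g) ^+ 2 + 8 * (f + g) - 4) (- 6 * (f + g) ^+ 2 - 6)
     (f * x - 1) ((f ^+ 2 + g ^+ 2) / 2 * x - g) =
   GG (4 * (f + g) ^+ 3 - 4 * (f + g) ^+ 2 + 8 * (f + g) - 4) (- 6 * (f + g) ^+ 2 - 6)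
     f ((f ^+ 2 + g ^+ 2) / 2) *
   GG (4 * (f + g) ^+ 3 - 4 * (f + g) ^+ 2 + 8 * (f + g) - 4) (- 6 * (f + g) ^+ 2 - 6) x 1 + ((1/2) + (-3/2)*g + (-3/4)*g^+2 + (1)*g^+2*x + (2)*g^+3*x + (-1/8)*g^+4 + (-1/2)*g^+4*x + (-3/4)*g^+4*x^+2 + (-1/8)*g^+5 + (-1/2)*g^+5*x + (3/4)*g^+5*x^+2 + (-1/16)*g^+6 + (-1/4)*g^+6*x + (9/8)*g^+6*x^+2 + (-1/4)*g^+6*x^+3 + (3/4)*g^+7*x^+2 + (-1/2)*g^+7*x^+3 + (3/8)*g^+8*x^+2 + (-1/4)*g^+8*x^+3 + (-1/4)*g^+9*x^+3 + (1/2)*f + (-2)*f*x + (2)*f*g + (4)*f*g*x + (-2)*f*g^+2*x + (-3)*f*g^+2*x^+2 + (1/2)*f*g^+3 + (2)*f*g^+3*x + (-3)*f*g^+3*x^+2 + (3/8)*f*g^+4 + (3/2)*f*g^+4*x + (-9/4)*f*g^+4*x^+2 + (3/2)*f*g^+4*x^+3 + (1/4)*f*g^+5 + (1)*f*g^+5*x + (-3)*f*g^+5*x^+2 + (-3/4)*f*g^+6*x^+2 + (3/2)*f*g^+6*x^+3 + (-3/4)*f*g^+7*x^+2 + (-1/2)*f*g^+7*x^+3 + (1/4)*f*g^+8*x^+3 + (1/4)*f^+2 + (-1)*f^+2*x + (3)*f^+2*x^+2 + (-4)*f^+2*g*x + (-3)*f^+2*g*x^+2 + (-3/4)*f^+2*g^+2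 + (-3)*f^+2*g^+2*x + (6)*f^+2*g^+2*x^+2 + (3)*f^+2*g^+2*x^+3 + (-1/4)*f^+2*g^+3 + (-1)*f^+2*g^+3*x + (3/2)*f^+2*g^+3*x^+2 + (5/16)*f^+2*g^+4 + (5/4)*f^+2*g^+4*x + (-21/8)*f^+2*g^+4*x^+2 + (-3/4)*f^+2*g^+4*x^+3 + (-9/4)*f^+2*g^+5*x^+2 + (9/2)*f^+2*g^+5*x^+3 + (-9/2)*f^+2*g^+6*x^+2 + (-1)*f^+2*g^+6*x^+3 + (7/2)*f^+2*g^+7*x^+3 + (-2)*f^+3*x + (-2)*f^+3*x^+3 + (1/2)*f^+3*g + (2)*f^+3*g*x + (3)*f^+3*g*x^+2 + (3/4)*f^+3*g^+2 + (3)*f^+3*g^+2*x + (-9/2)*f^+3*g^+2*x^+2 + (-7)*f^+3*g^+2*x^+3 + (-1/2)*f^+3*g^+3 + (-2)*f^+3*g^+3*x + (6)*f^+3*g^+3*x^+2 + (8)*f^+3*g^+3*x^+3 + (-15/4)*f^+3*g^+4*x^+2 + (-11/2)*f^+3*g^+4*x^+3 + (-9/4)*f^+3*g^+5*x^+2 + (5/2)*f^+3*g^+5*x^+3 + (9/2)*f^+3*g^+6*x^+3 + (-5/8)*f^+4 + (-5/2)*f^+4*x + (27/4)*f^+4*x^+2 + (3)*f^+4*x^+3 + (-1/8)*f^+4*g + (-1/2)*f^+4*g*x + (3/4)*f^+4*g*x^+2 + (-4)*f^+4*g*x^+3 + (-3/16)*f^+4*g^+2 + (-3/4)*f^+4*g^+2*x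 + (27/8)*f^+4*g^+2*x^+2 + (29/4)*f^+4*g^+2*x^+3 + (-27/4)*f^+4*g^+3*x^+2 + (-27/2)*f^+4*g^+3*x^+3 + (21/4)*f^+4*g^+4*x^+2 + (21/2)*f^+4*g^+4*x^+3 + (-2)*f^+4*g^+5*x^+3 + (3/8)*f^+5 + (3/2)*f^+5*x + (-9/4)*f^+5*x^+2 + (-17/2)*f^+5*x^+3 + (-3/4)*f^+5*g + (-3)*f^+5*g*x + (9)*f^+5*g*x^+2 + (8)*f^+5*g*x^+3 + (-21/4)*f^+5*g^+2*x^+2 + (-31/2)*f^+5*g^+2*x^+3 + (39/4)*f^+5*g^+3*x^+2 + (29/2)*f^+5*g^+3*x^+3 + (-10)*f^+5*g^+4*x^+3 + (-9/16)*f^+6 + (-9/4)*f^+6*x + (57/8)*f^+6*x^+2 + (31/4)*f^+6*x^+3 + (-15/4)*f^+6*g*x^+2 + (-37/2)*f^+6*g*x^+3 + (27/2)*f^+6*g^+2*x^+2 + (15)*f^+6*g^+2*x^+3 + (-31/2)*f^+6*g^+3*x^+3 + (-9/4)*f^+7*x^+2 + (-17/2)*f^+7*x^+3 + (45/4)*f^+7*g*x^+2 + (23/2)*f^+7*g*x^+3 + (-33/2)*f^+7*g^+2*x^+3 + (27/8)*f^+8*x^+2 + (15/4)*f^+8*x^+3 + (-39/4)*f^+8*g*x^+3 + (-9/4)*f^+9*x^+3) * (f ^+ 2 + 4 * f * g + g ^+ 2 - 2 * f - 2 * g + 2).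
Proof. move=> h2; rewrite /GG. field; by rewrite (h2 3) (h2 7) (h2 1) (h2 15). Qed.

Definition aZ (s : int) : int := 4 * s ^+ 3 - 4 * s ^+ 2 + 8 * s - 4.
Definition bZ (s : int) : int := - 6 * s ^+ 2 - 6.
Definition FZ (s : int) : {poly int} :=
  (((('X + (aZ s)%:P) * 'X + (bZ s)%:P) * 'X + 4%:P) * 'X + 1%:P).

Lemma size_FZ s : size (FZ s) = 5%N.
Proof.
have hx : ('X + (aZ s)%:P == 0) = false by rewrite -size_poly_eq0 size_XaddC.
by rewrite /FZ !size_MXaddC size_XaddC hx /= !andbF.
Qed.

Lemma FZ_Fs s : map_poly intr (FZ s) = Fs s.
Proof.
apply/polyP => i; rewrite coef_map /= /FZ /Fs.
rewrite !(coefD, coefMX, coefC, coefX, coefCM, coefXn) /=.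
case: i => [|[|[|[|[|i]]]]] /=;
  by rewrite /aZ /bZ !(add0r, addr0, mulr0, mulr1).
Qed.

Lemma coef_FZ s : [/\ (FZ s)`_0 = 1, (FZ s)`_1 = 4, (FZ s)`_2 = bZ s,
  (FZ s)`_3 = aZ s & (FZ s)`_4 = 1].
Proof.
by rewrite /FZ !(coefD, coefMX, coefC, coefX) /=; split; ring.
Qed.

Lemma FZ_horner s x : (FZ s).[x] = x ^+ 4 + aZ s * x ^+ 3 + bZ s * x ^+ 2 + 4 * x + 1.
Proof. rewrite /FZ !hornerMXaddC hornerD hornerX hornerC; ring. Qed.

Lemma FZ_lin s (p r : {poly int}) : FZ s = p * r -> size p = 2%N -> False.
Proof.
move=> E hp.
have nr : r != 0 by apply: contraTneq isT => r0; move: (size_FZ s); rewrite E r0 mulr0 size_poly0.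
have hl : p`_1 * lead_coef r = 1.
  have := lead_coefM p r; rewrite -E /lead_coef hp size_FZ /=.
  by case: (coef_FZ s) => _ _ _ _ ->.
have h0 : p`_0 * r`_0 = 1.
  by rewrite -coef0M -E; case: (coef_FZ s).
have hpx x : p.[x] = p`_0 + p`_1 * x.
  by rewrite horner_coef hp !big_ord_recl big_ord0 /= expr0 mulr1 expr1 addr0.
have root0 : (FZ s).[- p`_0 * p`_1] = 0.
  rewrite E hornerM hpx.
  have [[-> _]|[-> _]] := u1 _ _ hl; have [[-> _]|[-> _]] := u1 _ _ h0; ring.
move: root0; rewrite FZ_horner.
have [[-> _]|[-> _]] := u1 _ _ hl; have [[-> _]|[-> _]] := u1 _ _ h0 => h.
- apply: (c5 s); rewrite -[RHS]h /aZ /bZ; ring.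
- apply: (c4 s); rewrite -[RHS]h /aZ /bZ; ring.
- apply: (c4 s); rewrite -[RHS]h /aZ /bZ; ring.
- apply: (c5 s); rewrite -[RHS]h /aZ /bZ; ring.
Qed.

Lemma FZ_quad s m (hm : m ^+ 2 = 3 * s ^+ 2 - 4 * s + 4) (p r : {poly int}) :
  FZ s = p * r -> size p = 3%N -> size r = 3%N -> False.
Proof.
move=> E hp hr.
have pd k : (3 <= k)%N -> p`_k = 0 by move=> hk; apply: nth_default; rewrite hp.
have rd k : (3 <= k)%N -> r`_k = 0 by move=> hk; apply: nth_default; rewrite hr.
have cE i : (FZ s)`_i = \sum_(j < i.+1) p`_j * r`_(i - j) by rewrite E coefM.
case: (coef_FZ s) => c0 c1' c2' c3' c4'.
have E0 := cE 0%N; have E1 := cE 1%N; have E2 := cE 2%N; have E3 := cE 3%N; have E4 := cE 4%N.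
rewrite !big_ord_recr big_ord0 /= in E0 E1 E2 E3 E4.
rewrite ?subSS ?subn0 ?subnn ?(pd 3) ?(pd 4) ?(rd 3) ?(rd 4) // !big_ord0 in E0 E1 E2 E3 E4.
rewrite ?subSS ?subn0 ?subnn ?(pd 3) ?(pd 4) ?(rd 3) ?(rd 4) // in E0 E1 E2 E3 E4.
rewrite c0 in E0; rewrite c1' in E1; rewrite c2' in E2; rewrite c3' in E3; rewrite c4' in E4.
have e0 : p`_0 * r`_0 = 1 by rewrite E0 add0r.
have e4 : p`_2 * r`_2 = 1 by rewrite E4; ring.
have e1 : p`_0 * r`_1 + p`_1 * r`_0 = 4 by rewrite E1 add0r.
have e2 : p`_0 * r`_2 + p`_1 * r`_1 + p`_2 * r`_0 = bZ s by rewrite E2 add0r.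
have e3 : p`_1 * r`_2 + p`_2 * r`_1 = aZ s by rewrite E3; ring.
clear E0 E1 E2 E3 E4 c0 c1' c2' c3' c4' cE pd rd E.
move: e0 e1 e2 e3 e4; move: (p`_0) (p`_1) (p`_2) (r`_0) (r`_1) (r`_2) => p0 p1 p2 r0 r1 r2.
move=> e0 e1 e2 e3 e4.
have ha : aZ s = 4 \/ aZ s = -4.
  by have [[? ?]|[? ?]] := u1 _ _ e0; have [[? ?]|[? ?]] := u1 _ _ e4; subst; lia.
have [hs|hs] := c1 s ha; subst s.
  have [[? ?]|[? ?]] := u1 _ _ e0; have [[? ?]|[? ?]] := u1 _ _ e4; subst;
  move: e2 e3; rewrite /aZ /bZ => e2 e3; apply: (c3' p1 r1); lia.
apply: (c2 m); rewrite hm; ring.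
Qed.

Lemma FZ_factor s m (hm : m ^+ 2 = 3 * s ^+ 2 - 4 * s + 4) (p r : {poly int}) :
  FZ s = p * r -> (1 < size p)%N -> size p = 5%N.
Proof.
move=> E hp1.
have np : p != 0 by apply: contraTneq isT => p0; move: (size_FZ s); rewrite E p0 mul0r size_poly0.
have nr : r != 0 by apply: contraTneq isT => r0; move: (size_FZ s); rewrite E r0 mulr0 size_poly0.
have hs : (size p + size r).-1 = 5%N by rewrite -size_mul // -E size_FZ.
have hr0 : (0 < size r)%N by rewrite size_poly_gt0.
have E' : FZ s = r * p by rewrite E mulrC.
case hsp: (size p) hp1 hs => [|[|[|[|[|[|k]]]]]] //= _ hs.
- by case: (@FZ_lin _ _ _ E hsp).
- exfalso; apply: (@FZ_quad _ _ hm _ _ E hsp).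
  by move/eqP: hs; rewrite -[5%N]/(2 + 3)%N eqn_add2l => /eqP.
- exfalso; apply: (@FZ_lin _ _ _ E').
  by move/eqP: hs; rewrite -[5%N]/(3 + 2)%N eqn_add2l => /eqP.
- by move/eqP: hs; rewrite !addSn !eqSS; case: (size r) hr0 => // n _; rewrite addnS.
Qed.

Lemma Fs_div s m (hm : m ^+ 2 = 3 * s ^+ 2 - 4 * s + 4) (q : {poly rat}) :
  q %| Fs s -> (1 < size q)%N -> size q = 5%N.
Proof.
rewrite -FZ_Fs => /dvdpP_rat_int [p1 [a a0 ->] [r E]].
rewrite size_scale // size_rat_int_poly => h.
exact: (@FZ_factor _ _ hm _ _ E h).
Qed.

Lemma size_Fs s : size (Fs s) = 5%N.
Proof. by rewrite -FZ_Fs size_rat_int_poly size_FZ. Qed.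

Lemma dN_gen (K : fieldType) (f g h x : K) : h * x - g != 0 ->
  h * (f - g) * x + g ^+ 2 - h = (h * ((f * x - 1) / (h * x - g)) - g) * (h * x - g).
Proof. by move=> d1; field. Qed.

Lemma MN_gen (K : fieldType) (f g h x : K) : h * x - g != 0 ->
  h * (f - g) * x + g ^+ 2 - h != 0 ->
  (f * ((f * x - 1) / (h * x - g)) - 1) / (h * ((f * x - 1) / (h * x - g)) - g) =
  ((f ^+ 2 - h) * x + (g - f)) / (h * (f - g) * x + g ^+ 2 - h).
Proof. by move=> d1 d2; field; rewrite d1 d2. Qed.

Lemma NN_gen (K : fieldType) (a b c x : K) : c * x - a != 0 ->
  c * ((a * x + b) / (c * x - a)) - a != 0 ->
  (a * ((a * x + b) / (c * x - a)) + b) / (c * ((a * x + b) / (c * x - a)) - a) = x.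
Proof.
move=> d1 d2.
have e : c * (a * x + b) + - a * (c * x - a) = (c * ((a * x + b) / (c * x - a)) - a) * (c * x - a).
  by field.
by field; rewrite d1 e mulf_neq0.
Qed.

Set Implicit Arguments. Unset Strict Implicit.

Section Moeb.
Variables (L : fieldExtType rat) (s m : int).
Hypothesis hm : m ^+ 2 = 3 * s ^+ 2 - 4 * s + 4.

Local Notation f := (Mf L s m).
Local Notation g := (Mg L s m).
Local Notation h := ((Mf L s m ^+ 2 + Mg L s m ^+ 2) / 2).
Local Notation p := (map_poly (in_alg L) (Fs s)).
Local Notation M := (Mmap s m).
Local Notation den := (Mden s m).

Lemma nL n : (n.+1)%:R != 0 :> L.
Proof. by rewrite -(rmorph_nat (in_alg L)) fmorph_eq0 pnatr_eq0. Qed.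

Lemma intL_eq0 (z : int) : (z%:~R == 0 :> L) = (z == 0).
Proof. by rewrite -(rmorph_int (in_alg L)) fmorph_eq0 intr_eq0. Qed.

Lemma fgS : f + g = s%:~R.
Proof. rewrite /Mf /Mg !rmorphD rmorphN /=. field. by rewrite (nL 1). Qed.

Lemma fgM : f - g = m%:~R.
Proof. rewrite /Mf /Mg !rmorphD rmorphN /=. field. by rewrite (nL 1). Qed.

Lemma m0 : m != 0.
Proof. apply/eqP => e; move: hm; rewrite e; nia. Qed.

Lemma hrel : f ^+ 2 + 4 * f * g + g ^+ 2 - 2 * f - 2 * g + 2 = 0.
Proof.
have e : (m%:~R : L) ^+ 2 = 3 * (s%:~R) ^+ 2 - 4 * s%:~R + 4.
  by rewrite -rmorphXn hm !(rmorphD, rmorphB, rmorphM, rmorphXn, rmorphN, rmorph1) /=; ring.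
have ef : f = (s%:~R + m%:~R) / 2 by rewrite /Mf rmorphD.
have eg : g = (s%:~R - m%:~R) / 2 by rewrite /Mg rmorphB.
apply: (mulfI (nL 1)); rewrite mulr0.
have -> : 2%:R * (f ^+ 2 + 4 * f * g + g ^+ 2 - 2 * f - 2 * g + 2) =
   3 * (f + g) ^+ 2 - (f - g) ^+ 2 - 4 * (f + g) + 4 by ring.
by rewrite fgS fgM e; ring.
Qed.

Lemma p_hor x : p.[x] = GG (4 * (f + g) ^+ 3 - 4 * (f + g) ^+ 2 + 8 * (f + g) - 4)
   (- 6 * (f + g) ^+ 2 - 6) x 1.
Proof.
rewrite fgS horner_coef size_map_poly size_Fs !big_ord_recr big_ord0 /=.
rewrite !coef_map /= /Fs !(coefD, coefCM, coefXn, coefX, coefC) /=.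
rewrite !(mulr0, mulr1, addr0, add0r) -!in_algE !rmorph_int rmorph_nat rmorph1.
rewrite !(rmorphD, rmorphB, rmorphM, rmorphXn, rmorphN, rmorph1) /= /GG; ring.
Qed.

Lemma root_M x : p.[x] = 0 -> den x != 0 /\ p.[M x] = 0.
Proof.
move=> hx.
have K := key_id _ f g x nL.
rewrite hrel mulr0 addr0 -p_hor hx mulr0 in K.
have K' : GG (4 * (f + g) ^+ 3 - 4 * (f + g) ^+ 2 + 8 * (f + g) - 4)
   (- 6 * (f + g) ^+ 2 - 6) (f * x - 1) (den x) = 0 := K.
clear K.
have dn : den x != 0.
  apply/eqP => d0; move: K'; rewrite d0 /GG.
  rewrite !(mulr0, expr0n, addr0) /= => /eqP; rewrite expf_eq0 /= subr_eq0 => /eqP fx1.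
  move: d0; rewrite /Mden => /eqP; rewrite subr_eq0 => /eqP hx1.
  have e : h = f * g.
    have t : h * (f * x) = f * (h * x) by ring.
    by rewrite fx1 hx1 mulr1 in t.
  have : (f - g) ^+ 2 = 0.
    apply: (mulfI (nL 1)); rewrite mulr0.
    have -> : 2%:R * (f - g) ^+ 2 = 4 * (h - f * g) by field; rewrite (nL 1).
    by rewrite e subrr mulr0.
  by move/eqP; rewrite expf_eq0 /= fgM intL_eq0 (negPf m0).
split => //.
rewrite p_hor.
have -> : GG (4 * (f + g) ^+ 3 - 4 * (f + g) ^+ 2 + 8 * (f + g) - 4) (- 6 * (f + g) ^+ 2 - 6) (M x) 1 =
  GG (4 * (f + g) ^+ 3 - 4 * (f + g) ^+ 2 + 8 * (f + g) - 4) (- 6 * (f + g) ^+ 2 - 6) (f * x - 1) (den x)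
  / (den x) ^+ 4.
  by rewrite /GG /Mmap; field.
by rewrite K' mul0r.
Qed.

Lemma MM_fix (x : L) : den x != 0 -> den (M x) != 0 -> M (M x) = x -> M x = x.
Proof.
move=> d1 d2 e.
have e1 : M x * den x = f * x - 1 by rewrite /Mmap mulfVK.
have e2 : M (M x) * den (M x) = f * M x - 1 by rewrite /Mmap mulfVK.
rewrite e in e2.
have : (f - g) * (x - M x) = 0.
  have -> : (f - g) * (x - M x) = (x * den (M x) - (f * M x - 1)) - (M x * den x - (f * x - 1)).
    by rewrite /Mden; ring.
  rewrite e1 e2; ring.
move/eqP; rewrite mulf_eq0 fgM intL_eq0 (negPf m0) /= subr_eq0 => /eqP.
by move=> e3; symmetry.
Qed.

Lemma M_fix (x : L) : den x != 0 -> M x = x -> h * x ^+ 2 - (f + g) * x + 1 = 0.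
Proof.
move=> d1 e.
have e1 : M x * den x = f * x - 1 by rewrite /Mmap mulfVK.
rewrite e /Mden in e1.
have -> : h * x ^+ 2 - (f + g) * x + 1 = x * (h * x - g) - (f * x - 1) by ring.
by rewrite e1 subrr.
Qed.

Definition dN (x : L) : L := h * (f - g) * x + g ^+ 2 - h.
Definition N (x : L) : L := ((f ^+ 2 - h) * x + (g - f)) / dN x.

Lemma dN_eq (x : L) : den x != 0 -> dN x = den (M x) * den x.
Proof. exact: dN_gen. Qed.

Lemma MN (x : L) : den x != 0 -> den (M x) != 0 -> M (M x) = N x.
Proof.
move=> d1 d2.
have d3 : dN x != 0 by rewrite dN_eq // mulf_neq0.
exact: MN_gen.
Qed.

Lemma NN (x : L) : dN x != 0 -> dN (N x) != 0 -> N (N x) = x.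
Proof.
have e y : dN y = h * (f - g) * y - (f ^+ 2 - h).
  by rewrite /dN; field; rewrite (nL 1).
have eN y : N y = ((f ^+ 2 - h) * y + (g - f)) / (h * (f - g) * y - (f ^+ 2 - h)).
  by rewrite /N -e.
rewrite !eN !e => d1 d2.
exact: NN_gen.
Qed.

Lemma pOver : p \is a polyOver 1%VS.
Proof. by apply/polyOver1P; exists (Fs s). Qed.

Lemma minPoly_p (r : L) : p.[r] = 0 -> size (minPoly 1 r) = 5%N.
Proof.
move=> hr.
have [q1 Eq1] : exists q1, minPoly 1 r = map_poly (in_alg L) q1.
  by apply/polyOver1P; exact: minPolyOver.
have d1 : minPoly 1 r %| p by apply: minPoly_dvdp; [exact: pOver | exact/rootP].
rewrite Eq1 dvdp_map in d1.
have s1 : (1 < size q1)%N by rewrite -(size_map_poly (in_alg L)) -Eq1 size_minPoly.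
by rewrite Eq1 size_map_poly (@Fs_div _ _ hm _ d1 s1).
Qed.

Lemma deg_root (r : L) : p.[r] = 0 -> forall q : {poly rat}, q != 0 -> (size q <= 4)%N ->
  (map_poly (in_alg L) q).[r] != 0.
Proof.
move=> hr q q0 hq; apply/negP => /eqP hq0.
have [q1 Eq1] : exists q1, minPoly 1 r = map_poly (in_alg L) q1.
  by apply/polyOver1P; exact: minPolyOver.
have d2 : minPoly 1 r %| map_poly (in_alg L) q.
  by apply: minPoly_dvdp; [apply/polyOver1P; exists q | exact/rootP].
rewrite Eq1 dvdp_map in d2.
have := dvdp_leq q0 d2.
rewrite -(size_map_poly (in_alg L)) -Eq1 (minPoly_p hr).
by move=> /leq_trans /(_ hq).
Qed.

Lemma size_MXC_le (K : nzRingType) (q : {poly K}) c : (size (q * 'X + c%:P)%R <= (size q).+1)%N.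
Proof. by rewrite size_MXaddC; case: ifP. Qed.

Lemma in_alg_Mf : in_alg L (Mf rat s m) = f.
Proof. by rewrite /Mf fmorph_div rmorph_int rmorph_nat. Qed.
Lemma in_alg_Mg : in_alg L (Mg rat s m) = g.
Proof. by rewrite /Mg fmorph_div rmorph_int rmorph_nat. Qed.

Lemma map_quad (a b c : rat) (x : L) :
  (map_poly (in_alg L) ((a%:P * 'X + b%:P) * 'X + c%:P)).[x] = (in_alg L a * x + in_alg L b) * x + in_alg L c.
Proof.
by rewrite !(rmorphD, rmorphM) /= !map_polyC map_polyX !(hornerD, hornerM, hornerC, hornerX).
Qed.

Lemma quad_root (r : L) : p.[r] = 0 -> h * r ^+ 2 - (f + g) * r + 1 != 0.
Proof.
move=> hr.
pose hq := (Mf rat s m ^+ 2 + Mg rat s m ^+ 2) / 2.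
pose sq := Mf rat s m + Mg rat s m.
pose q2 := (hq%:P * 'X + (- sq)%:P) * 'X + 1%:P.
have q0 : q2 != 0.
  apply/eqP => e; have := congr1 (horner^~ 0) e.
  by rewrite /q2 !(hornerD, hornerM, hornerC, hornerX) !mulr0 add0r => /eqP; rewrite oner_eq0.
have sq2 : (size q2 <= 4)%N.
  apply: (leq_trans (size_MXC_le _ _)); rewrite ltnS.
  apply: (leq_trans (size_MXC_le _ _)); rewrite ltnS.
  by apply: (leq_trans (size_polyC_leq1 _)).
have := deg_root hr q0 sq2.
rewrite /q2 map_quad.
have eh : in_alg L hq = h.
  have E1 := rmorphXn (in_alg L) 2 (Mf rat s m).
  have E2 := rmorphXn (in_alg L) 2 (Mg rat s m).
  have F1 : (Mf rat s m)%:A = f := in_alg_Mf.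
  have F2 : (Mg rat s m)%:A = g := in_alg_Mg.
  have F3 : (2%:R : rat)%:A = 2 :> L := rmorph_nat (in_alg L) 2.
  rewrite /= in E1 E2.
  by rewrite /hq fmorph_div rmorphD /= E1 E2 F1 F2 F3.
have es : in_alg L (- sq) = - (f + g).
  have F1 : (Mf rat s m)%:A = f := in_alg_Mf.
  have F2 : (Mg rat s m)%:A = g := in_alg_Mg.
  by rewrite /sq rmorphN rmorphD /= F1 F2.
rewrite eh es rmorph1.
by apply: contra => /eqP e; apply/eqP; rewrite -e; ring.
Qed.

Lemma M_ne (r : L) : p.[r] = 0 -> M r != r /\ M (M r) != r.
Proof.
move=> hr.
have [d0 h1] := root_M hr.
have [d1 h2] := root_M h1.
have ne1 : M r != r.
  by apply/eqP => e; move: (quad_root hr); rewrite (M_fix d0 e) eqxx.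
split => //; apply/eqP => e.
by move/eqP: ne1; apply; apply: MM_fix.
Qed.

Lemma M4 (r : L) : p.[r] = 0 -> M (M (M (M r))) = r.
Proof.
move=> hr.
have [d0 h1] := root_M hr.
have [d1 h2] := root_M h1.
have [d2 h3] := root_M h2.
have [d3 h4] := root_M h3.
rewrite (MN d2 d3) (MN d0 d1) NN //.
  by rewrite dN_eq // mulf_neq0.
by rewrite -(MN d0 d1) dN_eq // mulf_neq0.
Qed.

End Moeb.

Lemma memM (L : fieldExtType rat) (K : {subfield L}) s m (y : L) :
  y \in K -> Mmap s m y \in K.
Proof.
move=> hy; rewrite /Mmap /Mden /Mf /Mg.
repeat (apply: rpred_div || apply: rpredB || apply: rpredD || apply: rpredM || apply: rpredX
  || apply: rpred_int || apply: rpred_nat || apply: rpred1 || exact: hy).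
Qed.

Lemma Mmap_morph (K : fieldType) (phi : {rmorphism K -> K}) s m (y : K) :
  phi (Mmap s m y) = Mmap s m (phi y).
Proof.
have h2 : phi 2 = 2 := rmorph_nat phi 2.
have hf : phi (Mf K s m) = Mf K s m.
  by rewrite /Mf fmorph_div rmorph_int h2.
have hg : phi (Mg K s m) = Mg K s m.
  by rewrite /Mg fmorph_div rmorph_int h2.
rewrite /Mmap /Mden; move: hf hg.
generalize (Mf K s m) (Mg K s m) => f g hf hg.
by rewrite !(h2, hf, hg, fmorph_div, fmorphV, rmorphB, rmorphD, rmorphM, rmorphXn, rmorph1).
Qed.

Lemma gal_M (L : splittingFieldType rat) (E : {vspace L}) (x : gal_of E) s m (y : L) :
  x (Mmap s m y) = Mmap s m (x y).
Proof. exact: Mmap_morph. Qed.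

Unset Implicit Arguments. Set Strict Implicit.

Theorem mainTheorem5 (s m : int) (hm0 : 0 <= m)
    (hm : m ^+ 2 = 3 * s ^+ 2 - 4 * s + 4)
    (L : splittingFieldType rat) (E : {subfield L})
    (hE : splittingFieldFor 1%VS (map_poly (in_alg L) (Fs s)) E) :
  [/\ cyclic ('Gal(E / 1%VS))%g, #|('Gal(E / 1%VS))%g| = 4%N,
      (forall r : L, root (map_poly (in_alg L) (Fs s)) r -> E = <<1%VS; r>>%VS)
    & exists2 sigma : gal_of E, generator ('Gal(E / 1%VS))%g sigma &
        forall r : L, root (map_poly (in_alg L) (Fs s)) r ->
          Mden s m r != 0 /\ sigma r = Mmap s m r].
Proof.
set p := map_poly (in_alg L) (Fs s).
have [rs Dp defE] := hE.
have rootE z : (p.[z] == 0) = (z \in rs).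
  by rewrite -/(root p z) (eqp_root Dp) root_prod_XsubC.
have p0 : p != 0 by rewrite -size_poly_eq0 size_map_poly size_Fs.
have srs : size rs = 4%N.
  by have := eqp_size Dp; rewrite size_map_poly size_Fs size_prod_XsubC => -[].
have RM z : p.[z] = 0 -> p.[(Mmap s m) z] = 0 := fun hz => (root_M hm hz).2.
have dist z : p.[z] = 0 -> uniq [:: z; (Mmap s m) z; (Mmap s m) ((Mmap s m) z); (Mmap s m) ((Mmap s m) ((Mmap s m) z))].
  move=> hz.
  have h1 := RM _ hz; have h2 := RM _ h1.
  have [n1 n2] := M_ne hm hz; have [n3 n4] := M_ne hm h1; have [n5 _] := M_ne hm h2.
  have n6 : (Mmap s m) ((Mmap s m) ((Mmap s m) z)) != z.
    apply: contra n1 => /eqP e; apply/eqP.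
    by rewrite -{2}(M4 hm hz) e.
  rewrite /= !inE !negb_or.
  rewrite eq_sym in n1; rewrite eq_sym in n2; rewrite eq_sym in n3.
  rewrite eq_sym in n4; rewrite eq_sym in n5; rewrite eq_sym in n6.
  by rewrite n1 n2 n6 n3 n4 n5.
have enum z w : p.[z] = 0 -> p.[w] = 0 ->
    w \in [:: z; Mmap s m z; Mmap s m (Mmap s m z); Mmap s m (Mmap s m (Mmap s m z))].
  move=> hz hw; apply/negPn/negP => nw.
  have h1 := RM _ hz; have h2 := RM _ h1; have h3 := RM _ h2.
  have U : uniq (w :: [:: z; Mmap s m z; Mmap s m (Mmap s m z); Mmap s m (Mmap s m (Mmap s m z))]).
    by rewrite cons_uniq nw dist.
  have A : all (root p) (w :: [:: z; Mmap s m z; Mmap s m (Mmap s m z); Mmap s m (Mmap s m (Mmap s m z))]).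
    by rewrite /= /root hz hw h1 h2 h3 !eqxx.
  by have := max_poly_roots p0 A U; rewrite size_map_poly size_Fs.
have inE' z : p.[z] = 0 -> z \in E.
  by move=> hz; rewrite -defE; apply: seqv_sub_adjoin; rewrite -rootE hz eqxx.
have Egen z : p.[z] = 0 -> (E : {vspace L}) = <<1; z>>%VS.
  move=> hz; apply/eqP; rewrite eqEsubv; apply/andP; split.
    rewrite -defE; apply/Fadjoin_seqP; split; first exact: sub1v.
    move=> w; rewrite -rootE => /eqP hw.
    have := enum z w hz hw; rewrite !inE => /or4P [] /eqP ->;
      repeat apply: memM; exact: memv_adjoin.
  by apply/FadjoinP; split; [exact: sub1v | exact: inE' z hz].
have r0in : rs`_0 \in rs by apply: mem_nth; rewrite srs.
set r0 := rs`_0 in r0in.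
have hr0 : p.[r0] = 0 by apply/eqP; rewrite rootE.
have nE : normalField 1 E.
  apply/(splitting_normalField (sub1v E)).
  by exists p; [exact: pOver | exact: hE].
have mp : minPoly 1 r0 %= p.
  have d := minPoly_dvdp (pOver L s) (_ : root p r0).
  rewrite -(dvdp_size_eqp (d _)) ?(minPoly_p hm hr0) ?size_map_poly ?size_Fs //.
  by apply/rootP.
have [sigma sG sr0] : exists2 x, x \in 'Gal(E / 1%VS)%g & x r0 = Mmap s m r0.
  apply: (normalField_root_minPoly (sub1v E) nE (inE' _ hr0)).
  by rewrite (eqp_root mp); apply/rootP; exact: RM.
have sigM z : p.[z] = 0 -> sigma z = Mmap s m z.
  move=> hz; have := enum r0 z hr0 hz.
  by rewrite !inE => /or4P [] /eqP ->; rewrite ?gal_M sr0.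
have itR k z : p.[z] = 0 -> p.[iter k (Mmap s m) z] = 0.
  by move=> hz; elim: k => [|k IH] //=; exact: RM.
have sigX k z : p.[z] = 0 -> (sigma ^+ k)%g z = iter k (Mmap s m) z.
  move=> hz; elim: k => [|k IH]; first by rewrite expg0 gal_id.
  rewrite expgSr galM; last exact: inE' _ hz.
  by rewrite IH /= sigM //; exact: itR.
have galEq x y : x \in 'Gal(E / 1%VS)%g -> y \in 'Gal(E / 1%VS)%g -> x r0 = y r0 -> x = y.
  move=> xG yG exy; apply/eqP/gal_eqP => a.
  move=> aE; have : a \in <<1; r0>>%VS by rewrite -(Egen _ hr0).
  case/Fadjoin_polyP => q qo ->.
  by rewrite -!horner_map !(fixedPoly_gal (sub1v E)) //= exy.
have s4 : (sigma ^+ 4 = 1)%g.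
  apply: galEq; [exact: groupX | exact: group1 | ].
  rewrite sigX // gal_id /=. exact: (M4 hm hr0).
have s2 : (sigma ^+ 2 != 1)%g.
  apply/eqP => e; have := congr1 (fun x : gal_of E => x r0) e.
  rewrite /= sigX // gal_id /=; have [_ n2] := M_ne hm hr0.
  by move/eqP: n2.
have o4 : #[sigma]%g = 4%N.
  have d4 : (#[sigma]%g %| 4)%N by rewrite order_dvdn s4.
  have d2 : ~~ (#[sigma]%g %| 2)%N by rewrite order_dvdn.
  by move: d4 d2; case: #[sigma]%g => [|[|[|[|[|n]]]]].
have gen : generator 'Gal(E / 1%VS)%g sigma.
  rewrite /generator eqEsubset cycle_subG sG andbT.
  apply/subsetP => x xG.
  have rx : p.[x r0] = 0.
    have := root_minPoly_gal (sub1v E) xG (inE' _ hr0).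
    by rewrite (eqp_root mp) => /rootP.
  have := enum r0 (x r0) hr0 rx; rewrite !inE => /or4P [] /eqP e.
  - by rewrite (galEq x (sigma ^+ 0)%g) ?mem_cycle ?groupX // sigX.
  - by rewrite (galEq x (sigma ^+ 1)%g) ?mem_cycle ?groupX // sigX.
  - by rewrite (galEq x (sigma ^+ 2)%g) ?mem_cycle ?groupX // sigX.
  - by rewrite (galEq x (sigma ^+ 3)%g) ?mem_cycle ?groupX // sigX.
split.
- by apply/cyclicP; exists sigma; exact/eqP.
- by rewrite (eqP gen) -orderE o4.
- move=> r hr; apply: val_inj; exact: (Egen r (eqP hr)).
- exists sigma => // r hr; split; first exact: (root_M hm (eqP hr)).1.
  exact: sigM (eqP hr).
Qed.
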